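(* Consider two linear classifiers $h_1(x)=\mathbf 1(w_1^\top x\ge0)$ and $h_2(x)=\mathbf 1(w_2^\top x\ge0)$ on $\mathbb R^2$ with $\|w_i\|_2=1$, and let $0<\theta<\pi$ satisfy $\cos\theta=-w_1^\top w_2$. If $\pi/2\le\theta<\pi$, then for every agent $x^{(0)}\in\mathbb R^2$ there exists an optimal sequential strategy $(x^{(1)},x^{(2)})$ with $x^{(1)}=x^{(2)}$; i.e. $c^*_{\mathrm{seq}}(x^{(0)},\{h_1,h_2\})=c^*_{\mathrm{conj}}(x^{(0)},\{h_1,h_2\})$.
   Context: With Euclidean cost, $c^*_{\mathrm{seq}}(x^{(0)},\{h_1,h_2\})=\min\{\|x^{(1)}-x^{(0)}\|_2+\|x^{(2)}-x^{(1)}\|_2:h_1(x^{(1)})=1,h_2(x^{(2)})=1\}$, an optimal sequential strategy is a minimizing pair, and $c^*_{\mathrm{conj}}(x^{(0)},\{h_1,h_2\})=\min\{\|z-x^{(0)}\|_2:h_1(z)=h_2(z)=1\}$. *)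

(* Defs.v *)
From Stdlib Require Import Reals.
Open Scope R_scope.

Definition pt : Type := (R * R)%type.

Definition dot (u v : pt) : R := fst u * fst v + snd u * snd v.

Definition norm2 (u : pt) : R := sqrt (dot u u).

Definition dist2 (u v : pt) : R :=
  sqrt ((fst u - fst v)^2 + (snd u - snd v)^2).

(* linear classifier h(x) = 1(w^T x >= 0); "h x = 1" is rendered as a Prop *)
Definition accepts (w x : pt) : Prop := 0 <= dot w x.

Definition seq_cost (x0 x1 x2 : pt) : R := dist2 x1 x0 + dist2 x2 x1.

Definition optimal_seq (w1 w2 x0 x1 x2 : pt) : Prop :=
  accepts w1 x1 /\ accepts w2 x2 /\
  forall y1 y2 : pt, accepts w1 y1 -> accepts w2 y2 ->
    seq_cost x0 x1 x2 <= seq_cost x0 y1 y2.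

Definition optimal_conj (w1 w2 x0 z : pt) : Prop :=
  accepts w1 z /\ accepts w2 z /\
  forall y : pt, accepts w1 y -> accepts w2 y -> dist2 z x0 <= dist2 y x0.

(* Main.v *)
Require Import Defs.
From Stdlib Require Import Reals Lra Psatz.
Open Scope R_scope.

Lemma dist2_tri (a b c : pt) : dist2 a c <= dist2 a b + dist2 b c.
Proof.
  destruct a as [a1 a2], b as [b1 b2], c as [c1 c2]; unfold dist2; cbn [fst snd].
  replace (a1 - c1) with ((a1 - b1) + (b1 - c1)) by ring.
  replace (a2 - c2) with ((a2 - b2) + (b2 - c2)) by ring.
  generalize (a1 - b1) (a2 - b2) (b1 - c1) (b2 - c2); intros u1 u2 v1 v2.
  assert (Hc := sqrt_cauchy u1 u2 v1 v2). unfold Rsqr in Hc.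
  replace (u1 * u1 + u2 * u2) with (u1^2+u2^2) in Hc by ring.
  replace (v1 * v1 + v2 * v2) with (v1^2+v2^2) in Hc by ring.
  assert (H1 := sqrt_pos (u1^2+u2^2)). assert (H2 := sqrt_pos (v1^2+v2^2)).
  assert (E1 : sqrt (u1^2+u2^2) * sqrt (u1^2+u2^2) = u1^2+u2^2) by (apply sqrt_sqrt; nra).
  assert (E2 : sqrt (v1^2+v2^2) * sqrt (v1^2+v2^2) = v1^2+v2^2) by (apply sqrt_sqrt; nra).
  rewrite <- (sqrt_pow2 (sqrt (u1 ^ 2 + u2 ^ 2) + sqrt (v1 ^ 2 + v2 ^ 2))) by lra.
  apply sqrt_le_1_alt.
  nra.
Qed.

Lemma dist2_self (a : pt) : dist2 a a = 0.
Proof. unfold dist2; replace ((fst a - fst a)^2 + (snd a - snd a)^2) with 0 by ring; apply sqrt_0. Qed.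

Lemma dist2_le_sq (a b c d : pt) :
  (fst a - fst b)^2 + (snd a - snd b)^2 <= (fst c - fst d)^2 + (snd c - snd d)^2 ->
  dist2 a b <= dist2 c d.
Proof. intros; unfold dist2; apply sqrt_le_1_alt; auto. Qed.

Lemma norm1 (w : pt) : norm2 w = 1 -> dot w w = 1.
Proof.
  unfold norm2, dot; intros H.
  assert (0 <= fst w * fst w + snd w * snd w) by nra.
  rewrite <- (sqrt_sqrt (fst w * fst w + snd w * snd w)) by auto. rewrite H; ring.
Qed.

Lemma proj_case (a b x y q1 q2 : R) :
  a*a + b*b = 1 -> 0 <= a*q1 + b*q2 -> a*x + b*y <= 0 ->
  (x - (a*x+b*y)*a - x)^2 + (y - (a*x+b*y)*b - y)^2 <= (q1 - x)^2 + (q2 - y)^2.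
Proof.
  intros Hn Hq Hs. set (s := a*x+b*y) in *.
  assert (E : (q1 - x)^2 + (q2 - y)^2 =
     (q1 - (x - s*a))^2 + (q2 - (y - s*b))^2 - 2*s*(a*q1+b*q2) + s^2*(a*a+b*b) + 2*s*s*(1 - (a*a+b*b))).
  { unfold s; ring. }
  rewrite E, Hn.
  assert (0 <= (q1 - (x - s*a))^2 + (q2 - (y - s*b))^2) by (apply Rplus_le_le_0_compat; apply pow2_ge_0).
  assert (0 <= - s * (a*q1+b*q2)) by nra.
  replace ((x - s*a - x)^2 + (y - s*b - y)^2) with (s^2*(a*a+b*b)) by ring. rewrite Hn. nra.
Qed.

Lemma polar_case (a1 b1 a2 b2 x y q1 q2 : R) :
  a1*a1 + b1*b1 = 1 -> a2*a2 + b2*b2 = 1 -> 0 <= a1*a2+b1*b2 ->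
  0 <= a1*q1 + b1*q2 -> 0 <= a2*q1 + b2*q2 ->
  a1*x+b1*y < 0 -> a2*x+b2*y < 0 ->
  (a2*x+b2*y) - (a1*x+b1*y)*(a1*a2+b1*b2) < 0 ->
  (a1*x+b1*y) - (a2*x+b2*y)*(a1*a2+b1*b2) < 0 ->
  (0 - x)^2 + (0 - y)^2 <= (q1 - x)^2 + (q2 - y)^2.
Proof.
  intros n1 n2 hc h1 h2 s1n s2n p1n p2n.
  set (c := a1*a2+b1*b2) in *. set (s1 := a1*x+b1*y) in *. set (s2 := a2*x+b2*y) in *.
  assert (Id : (1 - c*c) * (q1*x + q2*y) = (s1 - c*s2)*(a1*q1+b1*q2) + (s2 - c*s1)*(a2*q1+b2*q2)).
  { assert (G : ((a1*a1+b1*b1)*(a2*a2+b2*b2) - c*c) * (q1*x + q2*y) = (s1*(a2*a2+b2*b2) - c*s2)*(a1*q1+b1*q2) + (s2*(a1*a1+b1*b1) - c*s1)*(a2*q1+b2*q2)).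
    { unfold c, s1, s2. ring. }
    rewrite n1, n2 in G. rewrite !Rmult_1_r in G. exact G. }
  assert (Cs : c*c <= 1).
  { assert (G : c*c <= (a1*a1+b1*b1)*(a2*a2+b2*b2)).
    { unfold c. assert (0 <= (a1*b2-a2*b1)^2) by apply pow2_ge_0. nra. }
    rewrite n1, n2 in G. lra. }
  assert (Hc1 : c < 1).
  { destruct (Rlt_or_le c 1); auto. assert (c = 1) by nra. subst c. nra. }
  assert (R1 : (s1 - c*s2)*(a1*q1+b1*q2) <= 0) by nra.
  assert (R2 : (s2 - c*s1)*(a2*q1+b2*q2) <= 0) by nra.
  assert (q1*x+q2*y <= 0).
  { assert (0 < 1 - c*c) by nra.
    destruct (Rle_or_lt (q1*x+q2*y) 0); auto. nra. }
  nra.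
Qed.

Section Proj.
Variables a1 b1 a2 b2 : R.
Hypothesis n1 : a1*a1 + b1*b1 = 1.
Hypothesis n2 : a2*a2 + b2*b2 = 1.
Hypothesis cpos : 0 <= a1*a2 + b1*b2.

Definition w1 : pt := (a1, b1).
Definition w2 : pt := (a2, b2).

Definition P (x : pt) : pt :=
  let s1 := dot w1 x in let s2 := dot w2 x in
  let p1 := (fst x - s1 * a1, snd x - s1 * b1) in
  let p2 := (fst x - s2 * a2, snd x - s2 * b2) in
  if Rle_dec 0 s1 then
    if Rle_dec 0 s2 then x
    else if Rle_dec 0 (dot w1 p2) then p2 else (0,0)
  else if Rle_dec 0 (dot w2 p1) then p1
  else if Rle_dec 0 s2 then
    (if Rle_dec 0 (dot w1 p2) then p2 else (0,0))
  else if Rle_dec 0 (dot w1 p2) then p2 else (0,0).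

Definition inC (x : pt) := accepts w1 x /\ accepts w2 x.

Lemma P_in (x : pt) : inC (P x).
Proof.
  destruct x as [x y]; unfold P, inC, accepts, dot, w1, w2; simpl.
  repeat (destruct Rle_dec); simpl; split; nra.
Qed.

Lemma P_id (x : pt) : inC x -> P x = x.
Proof.
  destruct x as [x y]; unfold P, inC, accepts, dot, w1, w2; simpl; intros [H1 H2].
  repeat (destruct Rle_dec); simpl; try reflexivity; lra.
Qed.

Lemma P_opt (x q : pt) : inC q -> dist2 (P x) x <= dist2 q x.
Proof.
  destruct x as [x y], q as [q1 q2]; unfold P, inC, accepts, dot, w1, w2; cbn [fst snd]; intros [H1 H2].
  apply dist2_le_sq.
  repeat (destruct Rle_dec); cbn [fst snd].
  all: try (replace ((x - x)^2 + (y - y)^2) with 0 by ring; nra).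
  all: try (apply proj_case; auto; nra).
  all: try (apply polar_case with a1 b1 a2 b2; auto; nra).
  replace ((x - x)^2 + (y - y)^2) with 0 by ring. apply Rplus_le_le_0_compat; apply pow2_ge_0.
Qed.

Lemma L3 (y1 y2 : pt) : accepts w1 y1 -> accepts w2 y2 -> dist2 (P y1) y1 <= dist2 y2 y1.
Proof.
  intros A1 A2.
  destruct (Rle_dec 0 (dot w2 y1)) as [h|h].
  - rewrite P_id by (split; auto). rewrite dist2_self. apply sqrt_pos.
  - apply Rnot_le_lt in h.
    set (s2 := dot w2 y1) in *.
    set (p := (fst y1 - s2 * a2, snd y1 - s2 * b2)).
    assert (Hp : inC p).
    { destruct y1 as [u v]; unfold inC, accepts, p, s2, dot, w1, w2 in *; cbn [fst snd] in *. split; nra. }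
    apply Rle_trans with (dist2 p y1); [apply P_opt; auto|].
    apply dist2_le_sq.
    destruct y1 as [u v], y2 as [z1 z2]; unfold accepts, p, s2, dot, w1, w2 in *; cbn [fst snd] in *.
    set (t := a2*u+b2*v) in *.
    replace ((u - t*a2 - u)^2 + (v - t*b2 - v)^2) with (t*t*(a2*a2+b2*b2)) by ring.
    rewrite n2.
    assert (K : (a2*(z1-u) + b2*(z2-v))^2 <= ((z1-u)^2 + (z2-v)^2) * (a2*a2+b2*b2)).
    { assert (0 <= (a2*(z2-v) - b2*(z1-u))^2) by apply pow2_ge_0. nra. }
    rewrite n2 in K.
    assert (K2 : - t <= a2*(z1-u) + b2*(z2-v)) by (unfold t; lra).
    nra.
Qed.

End Proj.

Theorem mainTheorem14 (w1 w2 : pt) (theta : R) :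
  norm2 w1 = 1 -> norm2 w2 = 1 ->
  0 < theta < PI -> cos theta = - dot w1 w2 ->
  PI / 2 <= theta ->
  forall x0 : pt,
    exists x1 x2 : pt,
      optimal_seq w1 w2 x0 x1 x2 /\ x1 = x2 /\
      (forall z : pt, optimal_conj w1 w2 x0 z ->
         seq_cost x0 x1 x2 = dist2 z x0).
Proof.
  intros N1 N2 Ht Hc Hpi x0.
  apply norm1 in N1; apply norm1 in N2.
  assert (Hcos : cos theta <= 0) by (apply cos_le_0; lra).
  destruct w1 as [a1 b1], w2 as [a2 b2].
  unfold dot in N1, N2, Hc; cbn [fst snd] in N1, N2, Hc.
  assert (cp : 0 <= a1*a2+b1*b2) by lra.
  set (z := P a1 b1 a2 b2 x0).
  assert (Hz := P_in a1 b1 a2 b2 N1 N2 cp x0). fold z in Hz. destruct Hz as [Hz1 Hz2].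
  assert (Hsc : seq_cost x0 z z = dist2 z x0).
  { unfold seq_cost. rewrite dist2_self. ring. }
  exists z, z. split; [|split; [reflexivity|]].
  - split; [exact Hz1|split; [exact Hz2|]].
    intros y1 y2 A1 A2. rewrite Hsc. unfold seq_cost.
    assert (E1 := P_opt a1 b1 a2 b2 N1 N2 cp x0 (P a1 b1 a2 b2 y1) (P_in a1 b1 a2 b2 N1 N2 cp y1)).
    assert (E2 := dist2_tri (P a1 b1 a2 b2 y1) y1 x0).
    assert (E3 := L3 a1 b1 a2 b2 N1 N2 cp y1 y2 A1 A2).
    fold z in E1. lra.
  - intros q [Q1 [Q2 Q3]]. rewrite Hsc.
    apply Rle_antisym.
    + apply P_opt; auto. split; auto.
    + apply Q3; auto.
Qed.
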